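(* Let $a,b,q$ be parameters (complex numbers or indeterminates) such that no denominator below vanishes, let $c(n,a,b,q)=\frac{(b;q)_n}{(a;q)_n}$, and for integers $n\ge1$, $m\ge0$ let $$d(n,m,a,b,q)=\det\big(c(i+j+m,a,b,q)\big)_{i,j=0}^{n-1}.$$ Then $$d(n,0,a,b,q)=q^{2\binom{n}{3}}\prod_{k=1}^{n-1}\frac{(b;q)_k\,(q;q)_k\prod_{j=0}^{k-1}(b-q^ja)}{(q^{k-1}a;q)_k\,(a;q)_{2k}}$$ and $$d(n,m,a,b,q)=d(n,0,a,b,q)\,q^{m\binom{n}{2}}\prod_{j=0}^{m-1}\frac{(q^jb;q)_n}{(q^{n-1+j}a;q)_n}.$$
   Context: Notation: $(x;q)_n=\prod_{j=0}^{n-1}(1-q^jx)$, with $(x;q)_0=1$; empty products equal $1$. *)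

(* Defs.v *)
(* parameters a b q live in an arbitrary field R
   (covers complex numbers and rational functions in indeterminates). *)
From mathcomp Require Import all_boot all_order all_algebra.
Set Implicit Arguments. Unset Strict Implicit. Unset Printing Implicit Defensive.
Import GRing.Theory.
Local Open Scope ring_scope.

Definition qpoch (R : fieldType) (x q : R) (n : nat) : R :=
  \prod_(j < n) (1 - q ^+ j * x).

Definition cc (R : fieldType) (n : nat) (a b q : R) : R :=
  qpoch b q n / qpoch a q n.

Definition dd (R : fieldType) (n m : nat) (a b q : R) : R :=
  \det (\matrix_(i < n, j < n) cc (i + j + m)%N a b q).

(* Main.v *)
Require Import Defs.
From mathcomp Require Import all_boot all_order all_algebra.
From mathcomp Require Import ring zify.
Import GRing.Theory.
Local Open Scope ring_scope.
Set Implicit Arguments. Unset Strict Implicit.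

Section Q.
Variable R : fieldType.
Implicit Types (x a b q : R).

Lemma qpoch0 x q : qpoch x q 0 = 1.
Proof. by rewrite /qpoch big_ord0. Qed.

Lemma qpoch_recr x q k : qpoch x q k.+1 = qpoch x q k * (1 - q ^+ k * x).
Proof. by rewrite /qpoch big_ord_recr. Qed.

Lemma qpoch_add x q m k : qpoch x q (m + k) = qpoch x q m * qpoch (q ^+ m * x) q k.
Proof.
elim: k => [|k IH]; first by rewrite addn0 qpoch0 mulr1.
rewrite addnS !qpoch_recr IH exprD; ring.
Qed.

Lemma qpoch_shift x q k : qpoch x q k.+1 = (1 - x) * qpoch (q * x) q k.
Proof.
rewrite (qpoch_add x q 1 k) {1}/qpoch big_ord1 expr0 mul1r expr1 //.
Qed.

Lemma qpoch_nz a q N m k : qpoch a q N != 0 -> (m + k <= N)%N ->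
  qpoch (q ^+ m * a) q k != 0.
Proof.
move=> HN Hle; move: HN; rewrite -(subnKC Hle) qpoch_add qpoch_add.
by rewrite !mulf_eq0 !negb_or => /andP [/andP [_ ->]].
Qed.

Lemma qpoch_nz0 a q N k : qpoch a q N != 0 -> (k <= N)%N -> qpoch a q k != 0.
Proof. by move=> HN Hk; have := qpoch_nz (m:=0) HN Hk; rewrite expr0 mul1r. Qed.

Lemma qfac_nz a q N j : qpoch a q N != 0 -> (j < N)%N -> 1 - q ^+ j * a != 0.
Proof.
move=> HN Hj; have H1 : (j + 1 <= N)%N by rewrite addn1. have := qpoch_nz (m:=j) (k:=1) HN H1.
by rewrite /qpoch big_ord1 expr0 mul1r.
Qed.
End Q.

Section M.
Variable R : fieldType.
Implicit Types (x a b q : R).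

Lemma pulse N (f : 'I_N.+1 -> R) (j : nat) : (j < N.+1)%N ->
  \sum_(k < N.+1) f k * ((k.+1 == j.+1)%N%:R) = f (inord j).
Proof.
move=> hj; rewrite (bigD1 (inord j)) //= inordK // eqxx mulr1 big1 ?addr0 //.
move=> k; rewrite eqSS -(inj_eq val_inj) /= inordK // => /negbTE ->.
by rewrite mulr0.
Qed.

Lemma pulse0 N (f : 'I_N -> R) :
  \sum_(k < N) f k * ((k.+1 == 0)%N%:R) = 0.
Proof. by rewrite big1 // => k _; rewrite mulr0. Qed.

Definition tt a b q (j : nat) := (1 - q ^+ j.-1 * b) / (1 - q ^+ j.-1 * a).

Lemma entry a b q i j : qpoch a q (i + j).+2 != 0 ->
  cc (i.+1 + j.+1 + 0) a b q - cc (i.+1 + j + 0) a b q * tt a b q j.+1 =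
  (q ^+ i.+1 - 1) * cc (i + j + 0) (q ^+ 2 * a) (q * b) q *
  (q ^+ j * (a - b) / (1 - q ^+ j * a) * ((1 - b) / ((1 - a) * (1 - q * a)))).
Proof.
move=> H.
have -> : (i.+1 + j.+1 + 0 = (i + j).+2)%N by rewrite addn0 addnS addSn.
have -> : (i.+1 + j + 0 = (i + j).+1)%N by rewrite addn0 addSn.
rewrite /cc /tt /= addn0.
set L := (i + j)%N in H *.
set A := qpoch (q ^+ 2 * a) q L.
set B := qpoch (q * b) q L.
have E2 : qpoch a q L.+2 = (1 - a) * (1 - q * a) * A.
  by rewrite qpoch_shift qpoch_shift /A expr2 mulrA mulrA.
have nzA : A != 0 by apply: (qpoch_nz (m:=2) (k:=L) H); rewrite add2n.
have nz1 : 1 - a != 0 by have := qfac_nz (j:=0) H; rewrite expr0 mul1r; apply.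
have nz2 : 1 - q * a != 0 by have := qfac_nz (j:=1) H; rewrite expr1; apply.
have nz3 : 1 - q ^+ L.+1 * a != 0 by apply: (qfac_nz (j:=L.+1) H).
have nz4 : 1 - q ^+ j * a != 0.
  by apply: (qfac_nz (j:=j) H); rewrite /L ltnS ltnW // ltnS leq_addl.
have E1 : qpoch a q L.+1 = (1 - a) * (1 - q * a) * A / (1 - q ^+ L.+1 * a).
  by rewrite -E2 [qpoch a q L.+2]qpoch_recr mulfK.
have E4 : qpoch b q L.+1 = (1 - b) * B by rewrite qpoch_shift.
have E3 : qpoch b q L.+2 = (1 - b) * B * (1 - q ^+ L.+1 * b).
  by rewrite qpoch_recr E4.
rewrite E1 E2 E3 E4 -/A -/B.
have EL : q ^+ L.+1 = q ^+ i.+1 * q ^+ j by rewrite -exprD addSn.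
move: nz3; rewrite EL => nz3; rewrite ?EL.
set y := q ^+ j in nz4 nz3 *; set z := q ^+ i.+1 in nz3 *.
by field; rewrite nzA nz1 nz2 nz3 nz4.
Qed.
End M.

Section D.
Variable R : fieldType.
Implicit Types (x a b q : R).

Lemma cc_step a b q j : cc j.+1 a b q = cc j a b q * tt a b q j.+1.
Proof. by rewrite /cc /tt !qpoch_recr /= mulf_div. Qed.

Definition rr q (i : nat) : R := q ^+ i.+1 - 1.
Definition ss a b q (j : nat) : R :=
  q ^+ j * (a - b) / (1 - q ^+ j * a) * ((1 - b) / ((1 - a) * (1 - q * a))).

Lemma dd_rec n a b q : qpoch a q (2 * n) != 0 ->
  dd n.+1 0 a b q =
  \prod_(j < n) (rr q j * ss a b q j) * dd n 0 (q ^+ 2 * a) (q * b) q.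
Proof.
move=> H.
set M := \matrix_(i < n.+1, j < n.+1) cc (i + j + 0) a b q.
set V := \matrix_(k < n.+1, j < n.+1) ((k.+1 == j)%N%:R * tt a b q j).
set U : 'M[R]_n.+1 := 1%:M - V.
have dU : \det U = 1.
  rewrite -det_tr det_trig; last first.
    apply/is_trig_mxP => i j lij; rewrite !mxE.
    have -> : (j == i) = false by apply/negbTE; rewrite -(inj_eq val_inj) /= neq_ltn lij orbT.
    have -> : (j.+1 == i)%N = false.
      by apply/negbTE; rewrite neq_ltn ltnS (ltnW lij) orbT.
    by rewrite mul0r subr0.
  by rewrite big1 // => i _; rewrite !mxE eqxx eqn_leq ltnn mul0r subr0.
have -> : dd n.+1 0 a b q = \det (M *m U) by rewrite det_mulmx dU mulr1.
have MV : forall (i : 'I_n.+1) (j : 'I_n),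
    (M *m U) i (lift ord0 j) = cc (i + j.+1 + 0) a b q - cc (i + j + 0) a b q * tt a b q j.+1.
  move=> i j; rewrite mulmxBr mulmx1 !mxE lift0.
  congr (_ - _).
  under eq_bigr => k _ do rewrite !mxE mulrA.
  have Hb : bump 0 j = j.+1 by []. rewrite -big_distrl /= Hb.
  have hj : (j < n.+1)%N by rewrite ltnS ltnW.
  by rewrite (pulse (fun k : 'I_n.+1 => cc (i + k + 0) a b q) hj) inordK.
have M0 : forall (i : 'I_n.+1), (M *m U) i ord0 = cc (i + 0 + 0) a b q.
  move=> i; rewrite mulmxBr mulmx1 !mxE.
  under eq_bigr => k _ do rewrite !mxE mulrA.
  by rewrite -big_distrl /= pulse0 mul0r subr0.
rewrite (expand_det_row _ ord0) big_ord_recl big1; last first.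
  by move=> j _; rewrite MV /= !add0n !addn0 cc_step subrr mul0r.
rewrite addr0 M0 /cofactor expr0 mul1r /cc /= !addn0 !qpoch0 divr1 mul1r.
set MU := M *m U in MV M0 *. clearbody MU.
set C := \matrix_(i < n, j < n) cc (i + j + 0) (q ^+ 2 * a) (q * b) q.
have -> : row' ord0 (col' ord0 MU) =
    diag_mx (\row_i rr q i) *m C *m diag_mx (\row_j ss a b q j).
  apply/matrixP => i j; rewrite mul_mx_diag mul_diag_mx !mxE MV !lift0.
  rewrite entry /rr //; apply: (qpoch_nz0 H).
  rewrite -addnS -addSn mul2n -addnn leq_add //.
rewrite !det_mulmx !det_diag /dd -/C mulrAC big_split /=.
under eq_bigr do rewrite mxE. have -> : \prod_(i < n) (\row_j ss a b q j) 0 i = \prod_(i < n) ss a b q i by apply: eq_bigr => i _; rewrite mxE. done.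
Qed.

Definition FF a b q (k : nat) : R :=
  qpoch b q k * qpoch q q k * \prod_(j < k) (b - q ^+ j * a)
       / (qpoch (q ^+ k.-1 * a) q k * qpoch a q (2 * k)).
Definition TT (n : nat) a b q : R :=
  q ^+ (2 * 'C(n, 3)) * \prod_(1 <= k < n) FF a b q k.

Lemma shift1 (F : nat -> R) N : \prod_(1 <= k < N.+1) F k = \prod_(k < N) F k.+1.
Proof.
elim: N => [|N IH]; first by rewrite big_ord0 big_geq.
by rewrite big_nat_recr //= IH big_ord_recr.
Qed.

Lemma prod_qpow q n : \prod_(k < n) q ^+ k.+1 = q ^+ 'C(n.+1, 2).
Proof.
elim: n => [|n IH]; first by rewrite big_ord0.
by rewrite big_ord_recr /= IH -exprD (binS n.+1) bin1.
Qed.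

Lemma FF0 a b q : qpoch a q 2 != 0 -> rr q 0 * ss a b q 0 = FF a b q 1.
Proof.
move=> H.
have nz1 : 1 - a != 0 by have := qfac_nz (j:=0) H; rewrite expr0 mul1r; apply.
have nz2 : 1 - q * a != 0 by have := qfac_nz (j:=1) H; rewrite expr1; apply.
rewrite /rr /ss /FF /= muln1 !qpoch_recr !qpoch0 big_ord1 !expr0 !expr1 !mul1r.
by field; rewrite nz1 nz2.
Qed.

Lemma FFstep a b q k : qpoch a q (2 * k.+2) != 0 ->
  rr q k.+1 * ss a b q k.+1 * FF (q ^+ 2 * a) (q * b) q k.+1 =
  q ^+ k.+1 * q ^+ k.+1 * FF a b q k.+2.
Proof.
move=> H.
set K := k.+1.
have e2 : (2 * k.+2 = (2 * K).+2)%N by rewrite /K mulnS add2n.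
rewrite e2 in H.
have nz1 : 1 - a != 0 by have := qfac_nz (j:=0) H; rewrite expr0 mul1r; apply.
have nz2 : 1 - q * a != 0 by have := qfac_nz (j:=1) H; rewrite expr1; apply.
have nz3 : 1 - q ^+ K * a != 0.
  by apply: (qfac_nz (j:=K) H); rewrite /K; lia.
have nzA1 : qpoch (q ^+ K.+1 * a) q K != 0.
  by apply: (qpoch_nz (m:=K.+1) (k:=K) H); rewrite /K; lia.
have nzA2 : qpoch (q ^+ 2 * a) q (2 * K) != 0.
  by apply: (qpoch_nz (m:=2) (k:=2 * K) H); rewrite add2n.
rewrite /FF /rr /ss e2 -/K /=.
have eP : \prod_(j < K) (q * b - q ^+ j * (q ^+ 2 * a)) =
    q ^+ K * \prod_(j < K) (b - q ^+ j.+1 * a).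
  rewrite (eq_bigr (fun j : 'I_K => q * (b - q ^+ j.+1 * a))); last first.
    by move=> j _; rewrite !exprS expr0 mulr1; ring.
  by rewrite big_split /= prodr_const card_ord.
have eP2 : \prod_(j < K.+1) (b - q ^+ j * a) = (b - a) * \prod_(j < K) (b - q ^+ j.+1 * a).
  by rewrite big_ord_recl expr0 mul1r.
have eA1 : qpoch (q ^+ K * a) q K.+1 = (1 - q ^+ K * a) * qpoch (q ^+ K.+1 * a) q K.
  by rewrite qpoch_shift exprS mulrA.
have eA1' : q ^+ k * (q ^+ 2 * a) = q ^+ K.+1 * a by rewrite mulrA -exprD addn2.
have eA2 : qpoch a q (2 * K).+2 = (1 - a) * (1 - q * a) * qpoch (q ^+ 2 * a) q (2 * K).
  by rewrite qpoch_shift qpoch_shift expr2 !mulrA.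
rewrite eP eP2 eA1 eA1' eA2 (qpoch_shift b) (qpoch_recr q q K) exprSr.
move: nzA1; rewrite exprSr => nzA1.
set y := q ^+ K in nz3 nzA1 *.
by field; rewrite nz1 nz2 nz3 nzA1 nzA2.
Qed.


Lemma T_main q n : forall a b, qpoch a q (2 * n) != 0 ->
  dd n.+1 0 a b q = TT n.+1 a b q.
Proof.
elim: n => [|n IH] a b H.
  rewrite /dd /TT det_trig ?mx11_is_trig // big_ord1 mxE /cc !qpoch0.
  by rewrite big_geq // mulr1 divr1.
rewrite dd_rec // IH; last first.
  by apply: (qpoch_nz (m:=2) (k:=2 * n) H); lia.
rewrite /TT !shift1 big_ord_recl [in RHS]big_ord_recl.
rewrite FF0; last by apply: (qpoch_nz0 H); lia.
rewrite -mulrA.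
have -> : \prod_(i < n) (rr q (lift ord0 i) * ss a b q (lift ord0 i)) *
    (q ^+ (2 * 'C(n.+1, 3)) * \prod_(k < n) FF (q ^+ 2 * a) (q * b) q k.+1) =
    q ^+ (2 * 'C(n.+1, 3)) * \prod_(k < n) (q ^+ k.+1 * q ^+ k.+1 * FF a b q k.+2).
  rewrite mulrCA -big_split /=; congr (_ * _); apply: eq_bigr => i _.
  have Hb : bump 0 i = i.+1 by [].
  rewrite ?lift0 ?Hb FFstep //; apply: (qpoch_nz0 H); have := ltn_ord i; lia.
under [in RHS]eq_bigr do rewrite lift0.
rewrite !big_split /= prod_qpow.
have -> : (2 * 'C(n.+2, 3) = 2 * 'C(n.+1, 3) + 'C(n.+1, 2) + 'C(n.+1, 2))%N.
  by rewrite binS; lia.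
rewrite !exprD; ring.
Qed.


Lemma dd_shift n m a b q : dd n m a b q =
  (qpoch b q m / qpoch a q m) ^+ n * dd n 0 (q ^+ m * a) (q ^+ m * b) q.
Proof.
rewrite /dd -detZ; congr (\det _); apply/matrixP => i j.
by rewrite !mxE /cc addn0 (addnC _ m) !qpoch_add mulf_div.
Qed.

Lemma Vstep a b q N : qpoch a q (2 * N.+1).+1 != 0 ->
  (1 - b) / (1 - a) * (qpoch b q N.+1 / qpoch (q ^+ N * a) q N.+1) * FF (q * a) (q * b) q N.+1
  = FF a b q N.+1 * q ^+ N.+1 * (qpoch b q N.+2 / qpoch (q ^+ N.+1 * a) q N.+2).
Proof.
move=> H; set K := N.+1.
have nz1 : 1 - a != 0 by have := qfac_nz (j:=0) H; rewrite expr0 mul1r; apply.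
have nz2 : 1 - q ^+ (2 * K) * a != 0 by apply: (qfac_nz (j:=2 * K) H).
have nzA : qpoch (q ^+ N * a) q K != 0 by apply: (qpoch_nz (m:=N) (k:=K) H); rewrite /K; lia.
have nzB : qpoch (q ^+ K * a) q K != 0 by apply: (qpoch_nz (m:=K) (k:=K) H); rewrite /K; lia.
have nzC : qpoch (q ^+ 1 * a) q (2 * K) != 0 by apply: (qpoch_nz (m:=1) (k:=2 * K) H); lia.
move: nzC; rewrite expr1 => nzC.
rewrite /FF /=.
have eP : \prod_(j < K) (q * b - q ^+ j * (q * a)) = q ^+ K * \prod_(j < K) (b - q ^+ j * a).
  rewrite (eq_bigr (fun j : 'I_K => q * (b - q ^+ j * a))); last first.
    by move=> j _; ring.
  by rewrite big_split /= prodr_const card_ord.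
have e1 : q ^+ N * (q * a) = q ^+ K * a by rewrite mulrA -exprSr.
have e2 : qpoch (q ^+ K * a) q K.+1 = qpoch (q ^+ K * a) q K * (1 - q ^+ (2 * K) * a).
  by rewrite qpoch_recr mulrA -exprD mul2n addnn.
have e3 : qpoch a q (2 * K) = (1 - a) * qpoch (q * a) q (2 * K) / (1 - q ^+ (2 * K) * a).
  by rewrite -qpoch_shift qpoch_recr mulfK.
rewrite eP e1 e2 e3 (qpoch_shift b q K).
by field; rewrite nz1 nz2 nzA nzB nzC.
Qed.

Lemma Vlem a b q N : qpoch a q (2 * N).+1 != 0 ->
  ((1 - b) / (1 - a)) ^+ N.+1 * \prod_(k < N) FF (q * a) (q * b) q k.+1 =
  \prod_(k < N) FF a b q k.+1 * q ^+ 'C(N.+1, 2) * (qpoch b q N.+1 / qpoch (q ^+ N * a) q N.+1).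
Proof.
elim: N => [|N IH] H.
  by rewrite !big_ord0 expr1 expr0 mul1r !mulr1 /= !qpoch_recr !qpoch0 !expr0 !mul1r.
rewrite big_ord_recr [in RHS]big_ord_recr /= exprS.
set X := (1 - b) / (1 - a).
transitivity (X * (X ^+ N.+1 * \prod_(i < N) FF (q * a) (q * b) q i.+1) * FF (q * a) (q * b) q N.+1).
  by ring.
rewrite IH; last by apply: (qpoch_nz0 H); lia.
have -> : 'C(N.+2, 2) = ('C(N.+1, 2) + N.+1)%N by rewrite (binS N.+1) bin1.
rewrite exprD.
have E := Vstep b H.
transitivity (\prod_(i < N) FF a b q i.+1 * q ^+ 'C(N.+1, 2) *
  (X * (qpoch b q N.+1 / qpoch (q ^+ N * a) q N.+1) * FF (q * a) (q * b) q N.+1)).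
  by ring.
by rewrite /X E; ring.
Qed.


Lemma Wlem a b q N m : qpoch a q (2 * N + m) != 0 ->
  (qpoch b q m / qpoch a q m) ^+ N.+1 * TT N.+1 (q ^+ m * a) (q ^+ m * b) q
  = TT N.+1 a b q * q ^+ (m * 'C(N.+1, 2)) *
    \prod_(j < m) (qpoch (q ^+ j * b) q N.+1 / qpoch (q ^+ (N.+1 - 1 + j) * a) q N.+1).
Proof.
elim: m => [|m IH] H.
  by rewrite !qpoch0 divr1 expr1n mul1r !expr0 !mul1r big_ord0 !mulr1.
have ea : q ^+ m.+1 * a = q * (q ^+ m * a) by rewrite exprS mulrA.
have eb : q ^+ m.+1 * b = q * (q ^+ m * b) by rewrite exprS mulrA.
have Ha : qpoch (q ^+ m * a) q (2 * N).+1 != 0.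
  by apply: (qpoch_nz (m:=m) (k:=(2 * N).+1) H); lia.
have V := Vlem (q ^+ m * b) Ha.
rewrite ea eb.
transitivity ((qpoch b q m / qpoch a q m) ^+ N.+1 * TT N.+1 (q ^+ m * a) (q ^+ m * b) q *
   (q ^+ 'C(N.+1, 2) * (qpoch (q ^+ m * b) q N.+1 / qpoch (q ^+ N * (q ^+ m * a)) q N.+1))).
  rewrite /TT !shift1 (qpoch_recr b q m) (qpoch_recr a q m) -mulf_div exprMn.
  set X := (1 - q ^+ m * b) / (1 - q ^+ m * a).
  set s := qpoch b q m / qpoch a q m.
  transitivity (s ^+ N.+1 * q ^+ (2 * 'C(N.+1, 3)) *
    (X ^+ N.+1 * \prod_(k < N) FF (q * (q ^+ m * a)) (q * (q ^+ m * b)) q k.+1)).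
    by ring.
  by rewrite /X V; ring.
rewrite IH; last by apply: (qpoch_nz0 H); lia.
have ed : q ^+ (N.+1 - 1 + m) * a = q ^+ N * (q ^+ m * a) by rewrite subn1 /= exprD mulrA.
rewrite big_ord_recr /= ed mulSn exprD.
ring.
Qed.

End D.

Unset Implicit Arguments.

Theorem theorem2 (R : fieldType) (a b q : R) (n m : nat) :
  (1 <= n)%N ->
  (forall k : nat, (k <= (2 * n - 2) + m)%N -> qpoch a q k != 0) ->
  dd n 0 a b q =
    q ^+ (2 * 'C(n, 3)) *
    \prod_(1 <= k < n)
      (qpoch b q k * qpoch q q k * \prod_(j < k) (b - q ^+ j * a)
       / (qpoch (q ^+ k.-1 * a) q k * qpoch a q (2 * k)))
  /\
  dd n m a b q =
    dd n 0 a b q * q ^+ (m * 'C(n, 2)) *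
    \prod_(j < m) (qpoch (q ^+ j * b) q n / qpoch (q ^+ (n - 1 + j) * a) q n).
Proof.
case: n => [//|N] _ H.
have H0 : qpoch a q (2 * N + m) != 0 by apply: H; lia.
have T0 : dd N.+1 0 a b q = TT N.+1 a b q.
  by apply: T_main; apply: (qpoch_nz0 H0); lia.
split; first by rewrite T0; reflexivity.
rewrite dd_shift T_main; last by apply: (qpoch_nz (m:=m) (k:=2 * N) H0); lia.
by rewrite Wlem // T0.
Qed.
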